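(* For any $d\ge0$, $k\ge2$ and $\theta\in(0,1]$ such that $k\theta^2>2$, $$\mathbb{P}\Big[\sum_{i\in L_d}X^{(d)}_i\le k^d/2\ \Big|\ X^{(0)}=1\Big]\le \frac{1}{\theta^2k-1}.$$
   Context: Broadcast (Ising) tree model: complete $k$-ary tree of depth $d$ with root $\rho$; $L_d$ = leaves; $\sigma_\rho$ uniform on $\{0,1\}$; each child $v$ of $u$ independently has $\sigma_v=\sigma_u$ with probability $(1+\theta)/2$ and $1-\sigma_u$ otherwise; $X^{(r)}=(\sigma_v)_{v\in L_r}$. *)

(* Defs.v *)
(* Broadcast (Ising) model on the complete k-ary tree of depth d,
   with the joint law of all spins given explicitly as a finite distribution. *)
From HB Require Import structures.
From mathcomp Require Import all_boot all_order all_algebra.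
Set Implicit Arguments. Unset Strict Implicit. Unset Printing Implicit Defensive.
Import Order.TTheory GRing.Theory Num.Theory.
Local Open Scope ring_scope.

(* Vertices of the complete k-ary tree of depth d: a vertex at level r
   (0 <= r <= d) is the sequence of child indices on the path from the root. *)
Definition vertex (d k : nat) : finType := {r : 'I_d.+1 & r.-tuple 'I_k}.

Definition vlevel d k (v : vertex d k) : nat := tag v.
Definition vpath d k (v : vertex d k) : seq 'I_k := val (tagged v).

Definition is_child d k (u v : vertex d k) : bool :=
  (vlevel v == (vlevel u).+1) && (take (vlevel u) (vpath v) == vpath u).

(* Spin configurations on all vertices; spins in {0,1} encoded as bool (true = 1). *)
Definition config (d k : nat) : finType := {ffun vertex d k -> bool}.

(* Root spin uniform; each child agrees with its parent w.p. (1+theta)/2,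
   independently. *)
Definition edge_weight (R : realFieldType) (theta : R) (a b : bool) : R :=
  if a == b then (1 + theta) / 2 else (1 - theta) / 2.

Definition config_prob (R : realFieldType) (d k : nat) (theta : R)
  (s : config d k) : R :=
  (1 / 2) * \prod_(u : vertex d k) \prod_(v : vertex d k | is_child u v)
              edge_weight theta (s u) (s v).

Definition root_spin d k (s : config d k) : bool :=
  \big[orb/false]_(v : vertex d k | vlevel v == 0%N) s v.

Definition leaf_sum d k (s : config d k) : nat :=
  \sum_(v : vertex d k | vlevel v == d) (s v : nat).

Definition Prob (R : realFieldType) d k (theta : R) (E : pred (config d k)) : R :=
  \sum_(s : config d k | E s) config_prob theta s.

Definition CondProb (R : realFieldType) d k (theta : R)
  (E F : pred (config d k)) : R :=
  Prob theta (predI E F) / Prob theta F.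

(* Main.v *)
Require Import Defs.
From HB Require Import structures.
From mathcomp Require Import all_boot all_order all_algebra.
From mathcomp Require Import ring lra.
Import Order.TTheory GRing.Theory Num.Theory.
Local Open Scope ring_scope.

Module Part1.
Set Implicit Arguments. Unset Strict Implicit. Unset Printing Implicit Defensive.
Import Order.TTheory GRing.Theory Num.Theory.
Local Open Scope ring_scope.

Section Tree.
Variables d k : nat.
Local Notation V := (vertex d k).

Lemma vpath_size (v : V) : size (vpath v) = vlevel v.
Proof. by case: v => r t; rewrite /vpath /vlevel /= size_tuple. Qed.

Lemma vlevel_le (v : V) : (vlevel v <= d)%N.
Proof. by case: v => r t; rewrite /vlevel /= -ltnS ltn_ord. Qed.

Lemma vpath_inj : injective (@vpath d k).
Proof.
case=> r t [r' t'] /= E.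
have Er : r = r'.
  by apply: val_inj; rewrite /= -(size_tuple t) -(size_tuple t'); rewrite /vpath /= in E; rewrite E.
subst r'. rewrite /vpath /= in E. by have -> : t = t' by apply: val_inj.
Qed.

Definition vroot : V := existT (fun r : 'I_d.+1 => r.-tuple 'I_k) ord0 [tuple].

Lemma vpath_root : vpath vroot = [::].
Proof. by []. Qed.

Lemma vlevel0 (v : V) : (vlevel v == 0%N) = (v == vroot).
Proof.
apply/eqP/eqP => [H|->//]; apply: vpath_inj.
by apply/eqP; rewrite -size_eq0 vpath_size H.
Qed.

Definition mkv (p : seq 'I_k) : V := odflt vroot [pick v : V | vpath v == p].

Lemma vpath_mkv p : (size p <= d)%N -> vpath (mkv p) = p.
Proof.
move=> H; rewrite /mkv; case: pickP => [v /eqP //|].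
have H' : (size p < d.+1)%N by [].
move/(_ (existT (fun r : 'I_d.+1 => r.-tuple 'I_k) (Ordinal H') (@Tuple (size p) _ p (eqxx _)))).
by rewrite /vpath /= eqxx.
Qed.

Lemma mkv_vpath v : mkv (vpath v) = v.
Proof. by apply: vpath_inj; rewrite vpath_mkv // vpath_size vlevel_le. Qed.

Lemma take_neq (s t : seq 'I_k) n : (size s < size t)%N -> (take n s == t) = false.
Proof.
move=> H; apply/negbTE; apply/eqP => E; move: H; rewrite -E size_take_min.
by rewrite ltnNge geq_minr.
Qed.

Definition anc (w v : V) : bool := take (vlevel w) (vpath v) == vpath w.

Lemma anc_le w v : anc w v -> (vlevel w <= vlevel v)%N.
Proof.
rewrite /anc => /eqP E; rewrite -[vlevel w]vpath_size -E size_take vpath_size.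
by case: ifP => // /ltnW.
Qed.

Lemma anc_root w : anc w vroot -> w = vroot.
Proof. by move/anc_le; rewrite (_ : vlevel vroot = 0%N) // leqn0 vlevel0 => /eqP. Qed.

Definition parent (v : V) : V := mkv (take (vlevel v).-1 (vpath v)).

Lemma vpath_parent v : vpath (parent v) = take (vlevel v).-1 (vpath v).
Proof.
rewrite vpath_mkv // size_take vpath_size.
by case: ifP => _; [apply: leq_trans (vlevel_le v); apply: leq_pred | apply: vlevel_le].
Qed.

Lemma vlevel_parent v : vlevel (parent v) = (vlevel v).-1.
Proof.
rewrite -vpath_size vpath_parent size_take vpath_size.
case: (vlevel v) => //= n; by rewrite ltnSn.
Qed.

Lemma is_childE u v : is_child u v = (v != vroot) && (u == parent v).
Proof.
rewrite /is_child -vlevel0; apply/andP/andP => [[/eqP E1 /eqP E2]|[H1 /eqP ->]].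
  split; first by rewrite E1.
  apply/eqP; apply: vpath_inj; by rewrite vpath_parent E1 /= E2.
rewrite vlevel_parent (vpath_parent v) eqxx; split => //.
by case: (vlevel v) H1.
Qed.

Lemma anc_child w c : c != vroot -> anc w c = (w == c) || anc w (parent c).
Proof.
rewrite -vlevel0 => Hc; rewrite /anc vpath_parent.
have [Hlt|Hgt|Heq] := ltngtP (vlevel w) (vlevel c).
- rewrite take_takel; last by rewrite -ltnS prednK // lt0n.
  suff -> : (w == c) = false by [].
  by apply/negbTE; apply: contraTneq Hlt => ->; rewrite ltnn.
- have -> : (w == c) = false by apply/negbTE; apply: contraTneq Hgt => ->; rewrite ltnn.
  rewrite !take_neq //; last by rewrite !vpath_size.
  rewrite size_take_min !vpath_size.
  by apply: leq_ltn_trans (geq_minl _ _) _; apply: leq_ltn_trans (leq_pred _) Hgt.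
- rewrite [X in take X (vpath c)]Heq take_oversize; last by rewrite vpath_size.
  rewrite take_neq ?orbF; last first.
    rewrite size_take_min !vpath_size -Heq.
    apply: leq_ltn_trans (geq_minl _ _) _.
    by rewrite Heq; case: (vlevel c) Hc.
  by rewrite eq_sym; apply/eqP/eqP => [/vpath_inj|->].
Qed.

Definition child (c v : V) : bool := (c != vroot) && (parent c == v).

Lemma vlevel_child c v : child c v -> vlevel c = (vlevel v).+1.
Proof.
case/andP; rewrite -vlevel0 => H /eqP <-; rewrite vlevel_parent.
by case: (vlevel c) H.
Qed.

Lemma not_anc_child c v : child c v -> anc c v = false.
Proof.
move=> H; apply/negbTE; apply/negP => /anc_le; rewrite (vlevel_child H).
by rewrite ltnn.
Qed.

End Tree.

Unset Implicit Arguments. Set Strict Implicit. Set Printing Implicit Defensive.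
End Part1.
Import Part1.

Module Part2.
Set Implicit Arguments. Unset Strict Implicit. Unset Printing Implicit Defensive.
Import Order.TTheory GRing.Theory Num.Theory.
Local Open Scope ring_scope.

Section Prob.
Variables (R : realFieldType) (d k : nat) (theta : R).
Local Notation V := (vertex d k).
Local Notation C := (config d k).
Local Notation rt := (vroot d k).

Definition X (eta : C) (v : V) : bool :=
  \big[addb/false]_(w | (w != rt) && anc w v) eta w.

Definition g (eta : C) : C := [ffun v => addb (eta rt) (X eta v)].

Lemma X_root eta : X eta rt = false.
Proof.
rewrite /X big_pred0 // => w; apply/negbTE; apply/andP => [[H /anc_root E]].
by rewrite E eqxx in H.
Qed.

Lemma X_child eta v : v != rt -> X eta v = addb (eta v) (X eta (parent v)).
Proof.
move=> Hv; rewrite /X (eq_bigl (fun w => (w != rt) && ((w == v) || anc w (parent v)))); last first.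
  by move=> w; rewrite anc_child.
rewrite (bigD1 v) /=; last by rewrite Hv eqxx.
apply: congr1; apply: eq_bigl => w.
case: (eqVneq w v) => [->|Hwv]; last by rewrite /= andbT.
rewrite andbF Hv /= (@not_anc_child d k v (parent v)) //.
by apply/andP; split.
Qed.

Lemma g_root eta : g eta rt = eta rt.
Proof. by rewrite /g ffunE X_root addbF. Qed.

Lemma g_child eta v : v != rt -> g eta v = addb (g eta (parent v)) (eta v).
Proof.
move=> Hv; rewrite /g !ffunE X_child //.
by case: (eta rt); case: (eta v); case: (X eta (parent v)).
Qed.

Lemma g_inj : injective g.
Proof.
move=> e1 e2 E; apply/ffunP => v.
case: (eqVneq v rt) => [->|Hv]; first by rewrite -(g_root e1) -(g_root e2) E.
have := g_child e1 Hv; rewrite E (g_child e2 Hv).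
by move/(congr1 (addb (g e2 (parent v)))); rewrite !addKb.
Qed.


Definition q (b : bool) : R := if b then (1 - theta) / 2 else (1 + theta) / 2.

Lemma prob_g eta :
  config_prob theta (g eta) = 1 / 2 * \prod_(v | v != rt) q (eta v).
Proof.
rewrite /config_prob; congr (_ * _).
rewrite (exchange_big_dep predT) //= [RHS]big_mkcond /=.
apply: eq_bigr => v _.
case: (eqVneq v rt) => [->|Hv].
  by rewrite big_pred0 // => u; rewrite is_childE eqxx.
rewrite (big_pred1 (parent v)); last by move=> u; rewrite /= is_childE Hv.
rewrite (g_child eta Hv) /edge_weight /q.
by case: (g eta (parent v)); case: (eta v).
Qed.

Lemma root_spinE (s : C) : root_spin s = s rt.
Proof. by rewrite /root_spin (big_pred1 rt) // => v; rewrite /= vlevel0. Qed.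

Definition hq (v : V) (b : bool) : R :=
  if v == rt then (if b then 1 / 2 else 0) else q b.

Definition W (eta : C) : R := \prod_v hq v (eta v).

Definition T (N : V -> nat) : R :=
  \prod_(v | v != rt) (if odd (N v) then theta else 1).

Lemma Ex N : N rt = 0%N ->
  \sum_(eta : C) W eta * \prod_v ((-1) ^+ (eta v)) ^+ N v = 1 / 2 * T N.
Proof.
move=> HN; rewrite /W.
under eq_bigr do rewrite -big_split /=.
rewrite -(bigA_distr_bigA (fun v b => hq v b * ((-1) ^+ b) ^+ N v)) /=.
rewrite (bigD1 rt) //= big_bool /= /hq eqxx HN !expr0 !mulr1 addr0.
congr (_ * _); apply: eq_bigr => v Hv.
rewrite big_bool /= (negbTE Hv) /q expr1 expr0 expr1n mulr1 -signr_odd.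
case: (odd (N v)) => /=; rewrite ?expr1 ?expr0; lra.
Qed.


Definition nn (v w : V) : nat := nat_of_bool ((w != rt) && anc w v).

Definition G (v : V) (eta : C) : R := \prod_w ((-1) ^+ (eta w)) ^+ nn v w.

Lemma sign_g (eta : C) (v : V) : eta rt -> (-1) ^+ (~~ g eta v) = G v eta.
Proof.
move=> H; rewrite /g ffunE H /= negbK /X.
rewrite (big_morph (fun b : bool => (-1) ^+ b : R) (@signr_addb R) (expr0 (-1 : R) : (-1) ^+ false = 1)).
rewrite big_mkcond; apply: eq_bigr => w _; rewrite /nn.
by case: ((w != rt) && anc w v); rewrite ?expr1 ?expr0.
Qed.

Lemma nn_root v : nn v rt = 0%N.
Proof. by rewrite /nn eqxx. Qed.

Definition Zs (s : C) : R := \sum_(l | vlevel l == d) (-1) ^+ (~~ s l).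

Lemma ZsE s : Zs s = 2 * (leaf_sum s)%:R - \sum_(l : V | vlevel l == d) 1.
Proof.
rewrite /leaf_sum natr_sum mulr_sumr -sumrB; apply: eq_bigr => l _.
by case: (s l) => /=; rewrite ?expr0 ?expr1 ?mulr1n ?mulr0n; ring.
Qed.

Definition Mt : R := \sum_(l | vlevel l == d) \sum_(l' | vlevel l' == d)
   T (fun w => (nn l w + nn l' w)%N).
Definition mt : R := \sum_(l | vlevel l == d) T (nn l).

Lemma W_sum : \sum_(eta : C) W eta = 1 / 2.
Proof.
have := Ex (N := fun _ => 0%N) erefl.
rewrite (eq_bigr (fun eta => W eta)) => [->|eta _]; last first.
  by rewrite big1 ?mulr1 // => w _; rewrite expr0.
by rewrite /T big1 ?mulr1.
Qed.

Lemma W_G l : \sum_(eta : C) W eta * G l eta = 1 / 2 * T (nn l).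
Proof. by rewrite /G Ex // nn_root. Qed.

Lemma W_GG l l' : \sum_(eta : C) W eta * (G l eta * G l' eta) =
  1 / 2 * T (fun w => (nn l w + nn l' w)%N).
Proof.
rewrite -Ex; last by rewrite !nn_root.
apply: eq_bigr => eta _; congr (_ * _); rewrite /G -big_split /=.
by apply: eq_bigr => w _; rewrite exprD.
Qed.

Lemma main_sum (m : R) :
  \sum_(s : C) config_prob theta s * (root_spin s)%:R * (Zs s - m) ^+ 2
  = 1 / 2 * (Mt - 2 * m * mt + m ^+ 2).
Proof.
rewrite (reindex_inj g_inj) /=.
transitivity (\sum_(eta : C) W eta * (\sum_(l | vlevel l == d) G l eta - m) ^+ 2).
  apply: eq_bigr => eta _.
  rewrite prob_g root_spinE g_root /W [in RHS](bigD1 rt) //= /hq eqxx.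
  rewrite [in RHS](eq_bigr (fun v => q (eta v))) => [|v /negbTE -> //].
  case E: (eta rt) => /=; last by rewrite mulr0 !mul0r.
  rewrite mulr1; congr (_ * (_ - _) ^+ 2).
  by apply: eq_bigr => l _; apply: sign_g; rewrite E.
have E2 : \sum_(eta : C) W eta * (\sum_(l | vlevel l == d) G l eta) ^+ 2 = 1 / 2 * Mt.
  rewrite /Mt mulr_sumr.
  transitivity (\sum_(eta : C) \sum_(l | vlevel l == d) \sum_(l' | vlevel l' == d)
     W eta * (G l eta * G l' eta)).
    apply: eq_bigr => eta _; rewrite expr2 mulr_suml mulr_sumr; apply: eq_bigr => l _.
    by rewrite mulr_sumr mulr_sumr; apply: eq_bigr => l' _; rewrite mulrA.
  rewrite exchange_big /=; apply: eq_bigr => l _.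
  rewrite exchange_big /= mulr_sumr; apply: eq_bigr => l' _.
  by rewrite W_GG.
have E1 : \sum_(eta : C) W eta * (\sum_(l | vlevel l == d) G l eta) = 1 / 2 * mt.
  rewrite /mt mulr_sumr.
  under eq_bigr do rewrite mulr_sumr.
  rewrite exchange_big /=; apply: eq_bigr => l _.
  by rewrite W_G.
transitivity (\sum_(eta : C) (W eta * (\sum_(l | vlevel l == d) G l eta) ^+ 2
   - 2 * m * (W eta * (\sum_(l | vlevel l == d) G l eta)) + m ^+ 2 * W eta)).
  by apply: eq_bigr => eta _; ring.
rewrite big_split sumrB /= -!mulr_sumr E2 E1 W_sum; ring.
Qed.

End Prob.

Unset Implicit Arguments. Set Strict Implicit. Set Printing Implicit Defensive.
End Part2.
Import Part2.

Module Part3.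
Set Implicit Arguments. Unset Strict Implicit. Unset Printing Implicit Defensive.
Import Order.TTheory GRing.Theory Num.Theory.
Local Open Scope ring_scope.

Lemma rcons_take_last (T : eqType) (x : T) (s : seq T) : s != [::] ->
  rcons (take (size s).-1 s) (last x s) = s.
Proof.
case/lastP: s => [//|s y] _.
rewrite size_rcons /= last_rcons.
have -> : take (size s) (rcons s y) = s by rewrite -cats1 take_size_cat.
by [].
Qed.

Section Levels.
Variables (R : realFieldType) (d k : nat) (theta : R) (i0 : 'I_k).
Local Notation V := (vertex d k).
Local Notation C := (config d k).
Local Notation rt := (vroot d k).
Local Notation T := (@T R d k theta).
Local Notation nn := (@nn d k).

Lemma children_sum (v : V) (F : V -> R) : (vlevel v < d)%N ->
  \sum_(c | child c v) F c = \sum_(i : 'I_k) F (mkv d (rcons (vpath v) i)).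
Proof.
move=> Hv.
have Hs : forall i, (size (rcons (vpath v) i) <= d)%N by move=> i; rewrite size_rcons vpath_size.
rewrite (reindex_onto (fun i => mkv d (rcons (vpath v) i)) (fun c => last i0 (vpath c))) /=.
  apply: eq_bigl => i; rewrite (vpath_mkv (Hs i)) last_rcons eqxx andbT.
  apply/andP; split.
    apply/eqP => E; have := f_equal (@vpath d k) E; rewrite (vpath_mkv (Hs i)) vpath_root.
    by case: (vpath v).
  apply/eqP; apply: vpath_inj; rewrite (vpath_parent (mkv d (rcons (vpath v) i))).
  rewrite -vpath_size (vpath_mkv (Hs i)) size_rcons /= -cats1 take_size_cat //.
move=> c /andP [Hc /eqP Hp]; apply: vpath_inj.
have Hc' : vpath c != [::].
  by apply: contraNneq Hc => E; apply/eqP; apply: vpath_inj; rewrite E vpath_root.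
rewrite vpath_mkv; last by rewrite size_rcons vpath_size.
by rewrite -Hp (vpath_parent c) -vpath_size rcons_take_last.
Qed.

Lemma sum_child_const (v : V) (x : R) : (vlevel v < d)%N ->
  \sum_(c | child c v) x = k%:R * x.
Proof.
by move=> Hv; rewrite children_sum // sumr_const card_ord mulr_natl.
Qed.

Lemma lev_partition r (F : V -> R) : (r < d)%N ->
  \sum_(c | vlevel c == r.+1) F c = \sum_(v | vlevel v == r) \sum_(c | child c v) F c.
Proof.
move=> Hr.
rewrite (partition_big (@parent d k) (fun v => vlevel v == r)) => [|c /eqP Hc]; last first.
  by rewrite vlevel_parent Hc.
apply: eq_bigr => v /eqP Hv; apply: eq_bigl => c.
rewrite /child; case: (eqVneq (parent c) v) => [Hp|]; last by rewrite !andbF.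
rewrite !andbT.
case: (eqVneq c rt) => [->|Hc]; first by [].
have := vlevel_parent c; rewrite Hp Hv => ->.
have : vlevel c != 0%N by rewrite (vlevel0 c).
by case: (vlevel c) => [|n] //= _; rewrite eqxx.
Qed.


Lemma eq_T (N N' : V -> nat) : N =1 N' -> T N = T N'.
Proof. by move=> E; apply: eq_bigr => w _; rewrite E. Qed.

Lemma T_even (N : V -> nat) : (forall w, ~~ odd (N w)) -> T N = 1.
Proof. by move=> H; apply: big1 => w _; rewrite (negbTE (H w)). Qed.

Lemma T_add1 (N : V -> nat) c : c != rt -> ~~ odd (N c) ->
  T (fun w => N w + (w == c))%N = theta * T N.
Proof.
move=> Hc Ho; rewrite /Part2.T (bigD1 c) //= [X in _ = _ * X](bigD1 c) //=.
rewrite eqxx addn1 /= (negbTE Ho) mul1r; congr (_ * _).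
by apply: eq_bigr => w /andP [_ /negbTE ->]; rewrite addn0.
Qed.

Lemma eq_T_odd (N N' : V -> nat) : (forall w, odd (N w) = odd (N' w)) -> T N = T N'.
Proof. by move=> E; apply: eq_bigr => w _; rewrite E. Qed.

Lemma T_add2 (N : V -> nat) c c' : c != rt -> c' != rt -> ~~ odd (N c) -> ~~ odd (N c') ->
  T (fun w => N w + (w == c) + (w == c'))%N = (if c == c' then 1 else theta ^+ 2) * T N.
Proof.
move=> Hc Hc' Ho Ho'; case: (eqVneq c c') => [<-|Hne].
  rewrite mul1r; apply: eq_T_odd => w /=.
  by rewrite !oddD -addbA addbb addbF.
rewrite (T_add1 (N := fun w => (N w + (w == c))%N) Hc'); last first.
  by rewrite eq_sym (negbTE Hne) addn0.
by rewrite T_add1 // mulrA -expr2.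
Qed.

Lemma nn_child (c v w : V) : child c v -> nn c w = (nn v w + (w == c))%N.
Proof.
move=> Hcv; have /andP [Hc /eqP Hp] := Hcv.
rewrite /Part2.nn (@anc_child d k w c Hc) Hp.
case: (eqVneq w c) => [->|Hwc] /=; last by rewrite addn0.
by rewrite Hc /= (@not_anc_child d k c v Hcv).
Qed.

Lemma nn_zero (c v : V) : (vlevel v < vlevel c)%N -> nn v c = 0%N.
Proof.
move=> H; rewrite /Part2.nn; case E: (anc c v); last by rewrite andbF.
by have := anc_le E; rewrite leqNgt H.
Qed.

Lemma sum_eq_ind (P : pred V) (c : V) : \sum_(c' | P c') (c == c')%:R = (P c)%:R :> R.
Proof.
rewrite big_mkcond (bigD1 c) //= eqxx big1 => [|c' Hne].
  by case: (P c); rewrite addr0.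
by rewrite eq_sym (negbTE Hne); case: (P c').
Qed.

Definition cntL r : R := \sum_(v : V | vlevel v == r) 1.
Definition mtL r : R := \sum_(v : V | vlevel v == r) T (nn v).
Definition MtL r : R := \sum_(v : V | vlevel v == r) \sum_(v' : V | vlevel v' == r)
   T (fun w => nn v w + nn v' w)%N.

Lemma cnt_rec r : (r < d)%N -> cntL r.+1 = k%:R * cntL r.
Proof.
move=> Hr; rewrite /cntL lev_partition // mulr_sumr; apply: eq_bigr => v /eqP Hv.
by rewrite sum_child_const ?Hv // mulr1.
Qed.

Lemma child_ne_root (c v : V) : child c v -> c != rt.
Proof. by case/andP. Qed.

Lemma mt_rec r : (r < d)%N -> mtL r.+1 = k%:R * theta * mtL r.
Proof.
move=> Hr; rewrite /mtL lev_partition // mulr_sumr; apply: eq_bigr => v /eqP Hv.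
rewrite (eq_bigr (fun _ => theta * T (nn v))) => [|c Hcv].
  by rewrite sum_child_const ?Hv // mulrA.
rewrite (@eq_T (nn c) (fun w => nn v w + (w == c))%N) => [|w]; last exact: nn_child.
rewrite T_add1 //; first exact: child_ne_root Hcv.
by rewrite nn_zero // (vlevel_child Hcv).
Qed.

Lemma Mt_rec r : (r < d)%N ->
  MtL r.+1 = (k%:R * theta) ^+ 2 * MtL r + k%:R * (1 - theta ^+ 2) * cntL r.
Proof.
move=> Hr.
have key : forall v v' c c', child c v -> child c' v' -> vlevel v = r -> vlevel v' = r ->
    T (fun w => nn c w + nn c' w)%N =
    (if c == c' then 1 else theta ^+ 2) * T (fun w => nn v w + nn v' w)%N.
  move=> v v' c c' Hc Hc' Hv Hv'.
  rewrite (@eq_T _ (fun w => (nn v w + nn v' w) + (w == c) + (w == c'))%N) => [|w]; last first.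
    by rewrite (nn_child w Hc) (nn_child w Hc') addnACA addnA.
  apply: T_add2.
  - exact: child_ne_root Hc.
  - exact: child_ne_root Hc'.
  - by rewrite !nn_zero // (vlevel_child Hc) ?Hv ?Hv'.
  - by rewrite !nn_zero // (vlevel_child Hc') ?Hv ?Hv'.
have S : forall v v' : V, vlevel v = r -> vlevel v' = r ->
    \sum_(c | child c v) \sum_(c' | child c' v') (if c == c' then 1 else theta ^+ 2)
    = k%:R * (k%:R * theta ^+ 2) + k%:R * (1 - theta ^+ 2) * (v == v')%:R.
  move=> v v' Hv Hv'.
  transitivity (\sum_(c | child c v) (k%:R * theta ^+ 2 + (1 - theta ^+ 2) * (v == v')%:R)).
    apply: eq_bigr => c Hc.
    transitivity (\sum_(c' | child c' v') (theta ^+ 2 + (1 - theta ^+ 2) * (c == c')%:R)).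
      by apply: eq_bigr => c' _; case: (c == c'); rewrite /= ?mulr1 ?mulr0; ring.
    rewrite big_split /= sum_child_const ?Hv' // -mulr_sumr sum_eq_ind.
    have /andP [Hcr /eqP Hp] := Hc.
    by rewrite /child Hp Hcr.
  by rewrite sum_child_const ?Hv //; ring.
transitivity (\sum_(v | vlevel v == r) \sum_(v' | vlevel v' == r)
    T (fun w => nn v w + nn v' w)%N *
    (k%:R * (k%:R * theta ^+ 2) + k%:R * (1 - theta ^+ 2) * (v == v')%:R)).
  rewrite /MtL lev_partition //; apply: eq_bigr => v /eqP Hv.
  transitivity (\sum_(c | child c v) \sum_(v' | vlevel v' == r) \sum_(c' | child c' v')
      (if c == c' then 1 else theta ^+ 2) * T (fun w => nn v w + nn v' w)%N).
    apply: eq_bigr => c Hc; rewrite lev_partition //; apply: eq_bigr => v' /eqP Hv'.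
    by apply: eq_bigr => c' Hc'; apply: key.
  rewrite exchange_big /=; apply: eq_bigr => v' /eqP Hv'.
  rewrite -(S v v') // mulr_sumr; apply: eq_bigr => c _.
  by rewrite mulr_sumr; apply: eq_bigr => c' _; rewrite mulrC.
transitivity ((k%:R * theta) ^+ 2 * MtL r +
   k%:R * (1 - theta ^+ 2) * \sum_(v | vlevel v == r) \sum_(v' | vlevel v' == r)
      (v == v')%:R * T (fun w => nn v w + nn v' w)%N).
  rewrite /MtL !mulr_sumr -big_split /=; apply: eq_bigr => v _.
  rewrite !mulr_sumr -big_split /=; apply: eq_bigr => v' _; ring.
congr (_ + _ * _); rewrite /cntL; apply: eq_bigr => v Hv.
rewrite (bigD1 v) //= eqxx mul1r big1 => [|v' /andP [_ Hne]]; last first.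
  by rewrite eq_sym (negbTE Hne) mul0r.
by rewrite addr0 T_even // => w; rewrite addnn odd_double.
Qed.

End Levels.

Unset Implicit Arguments. Set Strict Implicit. Set Printing Implicit Defensive.
End Part3.
Import Part3.

Module Part4.
Set Implicit Arguments. Unset Strict Implicit. Unset Printing Implicit Defensive.
Import Order.TTheory GRing.Theory Num.Theory.
Local Open Scope ring_scope.

Section Final.
Variables (R : realFieldType) (d k : nat) (theta : R) (i0 : 'I_k).
Local Notation V := (vertex d k).
Local Notation C := (config d k).
Local Notation rt := (vroot d k).
Local Notation T := (@T R d k theta).
Local Notation nn := (@nn d k).

Lemma reindex_W (H : C -> R) :
  \sum_(s : C) config_prob theta s * (root_spin s)%:R * H s
  = \sum_(eta : C) W theta eta * H (g eta).
Proof.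
rewrite (reindex_inj (@g_inj d k)) /=.
apply: eq_bigr => eta _.
rewrite prob_g root_spinE g_root /W [in RHS](bigD1 rt) //= /hq eqxx.
rewrite [in RHS](eq_bigr (fun v => q theta (eta v))) => [|v /negbTE -> //].
by case E: (eta rt) => /=; [rewrite mulr1 | rewrite mulr0 !mul0r].
Qed.

Lemma lev0 (F : V -> R) : \sum_(v : V | vlevel v == 0%N) F v = F rt.
Proof. by rewrite (big_pred1 rt) // => v; rewrite /= vlevel0. Qed.

Lemma nn_rt w : nn rt w = 0%N.
Proof.
rewrite /Part2.nn; case E: (anc w rt); last by rewrite andbF.
by rewrite (anc_root E) eqxx.
Qed.

Lemma cnt_closed r : (r <= d)%N -> cntL R d k r = k%:R ^+ r.
Proof.
elim: r => [|r IH] Hr; first by rewrite /cntL lev0 expr0.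
by rewrite (cnt_rec R i0) // IH ?(ltnW Hr) // exprS.
Qed.

Lemma mt_closed r : (r <= d)%N -> mtL d k theta r = (k%:R * theta) ^+ r.
Proof.
elim: r => [|r IH] Hr.
  by rewrite /mtL lev0 expr0 T_even // => w; rewrite nn_rt.
by rewrite (mt_rec theta i0) // IH ?(ltnW Hr) // exprS.
Qed.

Hypothesis Hth0 : 0 <= theta.
Hypothesis Hth1 : theta <= 1.
Hypothesis Hx : 1 < k%:R * theta ^+ 2.

Lemma Mt_bound r : (r <= d)%N ->
  MtL d k theta r * (k%:R * theta ^+ 2 - 1) <= k%:R ^+ r * ((k%:R * theta ^+ 2) ^+ r.+1 - 1).
Proof.
set x := k%:R * theta ^+ 2.
elim: r => [|r IH] Hr.
  rewrite /MtL lev0 lev0 T_even ?expr0 ?expr1 ?mul1r // => w.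
  by rewrite nn_rt.
rewrite (Mt_rec theta i0) // cnt_closed ?(ltnW Hr) //.
have IH' := IH (ltnW Hr).
set M := MtL d k theta r in IH' *.
set K := k%:R ^+ r.
set P := x ^+ r.+1.
have Hk : 0 <= k%:R :> R by [].
have HK : 0 <= K by rewrite exprn_ge0.
have Hx1 : 0 <= x - 1 by rewrite /x subr_ge0 ltW.
have Ht2 : 0 <= theta ^+ 2 by rewrite exprn_ge0.
have E1 : (k%:R * theta) ^+ 2 = k%:R * x by rewrite /x; ring.
rewrite E1 exprS (exprS x).
have h1 : k%:R * x * (M * (x - 1)) <= k%:R * x * (K * (P - 1)).
  by apply: ler_wpM2l => //; rewrite mulr_ge0 //; lra.
have h2 : 0 <= k%:R * K * (x - 1) * theta ^+ 2.
  by rewrite !mulr_ge0.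
rewrite -/P.
apply: (le_trans (y := k%:R * x * (K * (P - 1)) + k%:R * K * (x - 1) - k%:R * K * (x - 1) * theta ^+ 2)).
  have -> : (k%:R * x * M + k%:R * (1 - theta ^+ 2) * K) * (x - 1)
      = k%:R * x * (M * (x - 1)) + k%:R * K * (x - 1) - k%:R * K * (x - 1) * theta ^+ 2 by ring.
  lra.
have -> : k%:R ^+ r.+1 * (x * P - 1) = k%:R * x * (K * (P - 1)) + k%:R * K * (x - 1) by rewrite /K exprS; ring.
lra.
Qed.

End Final.

Unset Implicit Arguments. Set Strict Implicit. Set Printing Implicit Defensive.
End Part4.
Import Part4.

Import Order.TTheory GRing.Theory Num.Theory.
Local Open Scope ring_scope.

Theorem mainTheorem10 (R : realFieldType) (d k : nat) (theta : R) :
  (2 <= k)%N -> 0 < theta -> theta <= 1 -> 2 < k%:R * theta ^+ 2 ->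
  CondProb theta
    (fun s : config d k => (leaf_sum s)%:R <= (k ^ d)%:R / 2 :> R)
    (fun s : config d k => root_spin s)
  <= 1 / (theta ^+ 2 * k%:R - 1).
Proof.
move=> Hk Ht0 Ht1 Hx2.
have i0 : 'I_k := Ordinal (leq_trans (isT : (0 < 2)%N) Hk).
have Hx : 1 < k%:R * theta ^+ 2 by apply: lt_trans Hx2; rewrite ltr1n.
have Hk0 : 0 < k%:R :> R by rewrite ltr0n (leq_trans _ Hk).
set m := (k%:R * theta) ^+ d.
have Hm : 0 < m by rewrite exprn_gt0 // mulr_gt0.
have Hp : forall s, 0 <= config_prob theta (s : config d k).
  move=> s; rewrite /config_prob mulr_ge0 //; first by lra.
  apply: prodr_ge0 => u _; apply: prodr_ge0 => v _.
  by rewrite /edge_weight; case: ifP => _; lra.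
have PF : Prob theta (fun s : config d k => root_spin s) = 1 / 2.
  rewrite /Prob.
  transitivity (\sum_(s : config d k) config_prob theta s * (root_spin s)%:R * 1).
    rewrite big_mkcond; apply: eq_bigr => s _.
    by case: (root_spin s); rewrite /= ?mulr1n ?mulr0n ?mulr1 ?mulr0.
  by rewrite (reindex_W theta (fun _ => 1)); under eq_bigr do rewrite mulr1; rewrite W_sum.
have PEF : Prob theta (predI (fun s : config d k => (leaf_sum s)%:R <= (k ^ d)%:R / 2 :> R)
                               (fun s : config d k => root_spin s))
           <= 1 / 2 * (Mt d k theta - 2 * m * mt d k theta + m ^+ 2) / m ^+ 2.
  rewrite -(main_sum d k theta m) mulr_suml /Prob big_mkcond.
  apply: ler_sum => s _ /=.
  have Hm2 : 0 < m ^+ 2 by rewrite exprn_gt0.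
  case Hr: (root_spin s); case He: ((leaf_sum s)%:R <= (k ^ d)%:R / 2 :> R) => /=;
    rewrite ?mulr1n ?mulr0n ?mulr1 ?mulr0 ?mul0r //; last first.
    by apply: divr_ge0; [apply: mulr_ge0 => //; apply: sqr_ge0 | apply: ltW].
  have HZ : Zs R s <= 0.
    rewrite ZsE; have := cnt_closed R i0 (leqnn d); rewrite /cntL => ->.
    by rewrite -natrX; lra.
  rewrite ler_pdivlMr //; apply: ler_wpM2l => //.
  nra.
rewrite /CondProb PF.
have EM : Mt d k theta = MtL d k theta d by [].
rewrite EM in PEF.
have Emt : mt d k theta = m by rewrite -[mt d k theta]/(mtL d k theta d) (mt_closed theta i0 (leqnn d)).
rewrite Emt in PEF.
have HB := Mt_bound i0 (ltW Ht0) Hx (leqnn d).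
set M := MtL d k theta d in PEF HB *.
set x := k%:R * theta ^+ 2 in Hx HB *.
set K := k%:R ^+ d in HB *.
set P := x ^+ d.
have HK : 0 < K by rewrite exprn_gt0.
have HP : 0 < P by rewrite exprn_gt0 // (lt_trans ltr01).
have Em : m ^+ 2 = K * P by rewrite /m /K /P /x -exprMn -exprM mulnC exprM; congr (_ ^+ _); ring.
rewrite Em in PEF.
rewrite exprS -/P in HB.
apply: (le_trans (y := (1 / 2 * (M - 2 * m * m + K * P) / (K * P)) / (1 / 2))).
  by apply: ler_wpM2r; [rewrite invr_ge0; lra | exact: PEF].
rewrite (mulrC (theta ^+ 2)) -/x.
have -> : 1 / 2 * (M - 2 * m * m + K * P) / (K * P) / (1 / 2) = (M - K * P) / (K * P).
  have -> : 2 * m * m = 2 * (K * P) by rewrite -Em; ring.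
  by field; rewrite !gt_eqF.
rewrite ler_pdivrMr ?mulr_gt0 //.
have -> : 1 / (x - 1) * (K * P) = K * P / (x - 1) by rewrite mulrC mul1r.
rewrite ler_pdivlMr; last by lra.
nra.
Qed.
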